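(* Let $\alpha\in(1,\infty)$ and suppose $g$ satisfies Assumption 1 with this $\alpha$ and with a supergradient $g'(x^* )>0$, and also satisfies Assumption 2 with the same $\alpha$. Then in the asymptotic regime there exist constants $0<K_1\le K_2$ and $c_0$ independent of $c$ such that for all $c\ge c_0$ there is a two-price policy $\mathbf x^{\mathrm{TP}}$ with $$K_1c^{1/(\alpha+1)}\le\lambda g(x^* )-\sup_{\mathbf x\in[0,1]^c}\mathcal R(\mathbf x)\le\lambda g(x^* )-\mathcal R(\mathbf x^{\mathrm{TP}})\le K_2\,c^{1/(\alpha+1)}(\log c)^2,$$ i.e. the optimal performance loss $\tilde\Theta(c^{1/(\alpha+1)})$ among stock-dependent policies is attained (up to logarithmic factors) by a two-price policy.
   Context: Setting. Fix $c\in\mathbb N$ (number of identical units of a single reusable resource), an arrival rate $\lambda>0$ and a mean usage duration $d>0$, with $x^*:=c/(\lambda d)\in(0,1)$. Let $g:[0,1]\to\mathbb R$ be concave, non-decreasing, with $g(0)=0$ (the reward function). A stock-dependent policy is a vector $\mathbf x=(x_1,\dots,x_c)\in[0,1]^c$, where $x_j$ is the admission probability used when exactly $j$ units are available (the admission probability is $0$ when no unit is available). Its steady-state distribution is the unique probability vector $\pi=(\pi_0,\dots,\pi_c)$ satisfying $\pi_j\lambda x_j=\pi_{j-1}(c-j+1)/d$ for all $j\in\{1,\dots,c\}$, and its long-run average reward is $\mathcal R(\mathbf x)=\sum_{j=1}^c\pi_j\lambda g(x_j)$. A two-price policy with parameters $x_L,x_H\in[0,1]$ and $\tau\in\{1,\dots,c\}$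 sets $x_j=x_L$ for $1\le j\le\tau$ and $x_j=x_H$ for $\tau<j\le c$. Asymptotic regime: $x^*\in(0,1)$, $d$ and $g$ are fixed, $c\to\infty$ and $\lambda=c/(x^*d)$. Assumption 1: there exist $0<\varepsilon<\min\{x^*,1-x^*\}$, $\alpha\in[1,\infty]$, $k_1\ge0$ and a supergradient $g'(x^* )\ge0$ of $g$ at $x^*$ such that $g(x)\ge g(x^* )+g'(x^* )(x-x^* )-k_1|x-x^*|^\alpha$ for all $x\in[x^*-\varepsilon,x^*+\varepsilon]$. Assumption 2: there exist $0<\varepsilon<\min\{x^*,1-x^*\}$, $\alpha\in[1,\infty]$, $k_2>0$ and a supergradient $g'(x^* )\ge0$ of $g$ at $x^*$ such that $g(x)\le g(x^* )+g'(x^* )(x-x^* )-k_2|x-x^*|^\alpha$ for all $x\in[x^*-\varepsilon,x^*+\varepsilon]$. *)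

(* Defs.v *)
From Stdlib Require Import Reals Lra Lia ClassicalEpsilon.
From Coquelicot Require Import Coquelicot.
Open Scope R_scope.

(* real power b^a for b >= 0 (with 0^a = 0 for a > 0) *)
Definition rpow (b a : R) : R := if Rlt_dec 0 b then Rpower b a else 0.

Definition reward_function (g : R -> R) : Prop :=
  g 0 = 0 /\
  (forall x y, 0 <= x -> x <= y -> y <= 1 -> g x <= g y) /\
  (forall x y t, 0 <= x <= 1 -> 0 <= y <= 1 -> 0 <= t <= 1 ->
     t * g x + (1 - t) * g y <= g (t * x + (1 - t) * y)).

Definition supergradient (g : R -> R) (xs s : R) : Prop :=
  forall y, 0 <= y <= 1 -> g y <= g xs + s * (y - xs).

Definition assumption1 (g : R -> R) (xs alpha s : R) : Prop :=
  exists eps k1, 0 < eps /\ eps < Rmin xs (1 - xs) /\ 0 <= k1 /\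
    0 <= s /\ supergradient g xs s /\
    forall x, xs - eps <= x <= xs + eps ->
      g xs + s * (x - xs) - k1 * rpow (Rabs (x - xs)) alpha <= g x.

Definition assumption2 (g : R -> R) (xs alpha s : R) : Prop :=
  exists eps k2, 0 < eps /\ eps < Rmin xs (1 - xs) /\ 0 < k2 /\
    0 <= s /\ supergradient g xs s /\
    forall x, xs - eps <= x <= xs + eps ->
      g x <= g xs + s * (x - xs) - k2 * rpow (Rabs (x - xs)) alpha.

(* A stock-dependent policy: x j in [0,1] for j = 1..c (other indices unused) *)
Definition policy (c : nat) (x : nat -> R) : Prop :=
  forall j, (1 <= j <= c)%nat -> 0 <= x j <= 1.

Definition is_steady_state (c : nat) (lam d : R) (x pi : nat -> R) : Prop :=
  (forall j, (j <= c)%nat -> 0 <= pi j) /\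
  sum_f_R0 pi c = 1 /\
  forall j, (1 <= j <= c)%nat ->
    pi j * lam * x j = pi (j - 1)%nat * INR (c - j + 1) / d.

Definition steady_state (c : nat) (lam d : R) (x : nat -> R) : nat -> R :=
  epsilon (inhabits (fun _ : nat => 0)) (is_steady_state c lam d x).

Definition avg_reward (c : nat) (lam d : R) (g : R -> R) (x : nat -> R) : R :=
  sum_f 1 c (fun j => steady_state c lam d x j * lam * g (x j)).

Definition opt_reward (c : nat) (lam d : R) (g : R -> R) : R :=
  real (Lub_Rbar (fun r => exists x, policy c x /\ r = avg_reward c lam d g x)).

Definition two_price (xL xH : R) (tau : nat) : nat -> R :=
  fun j => if (j <=? tau)%nat then xL else xH.

(* Main.v *)
Require Import Defs.
From Stdlib Require Import Reals Lra Lia ClassicalEpsilon ZArith.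
From Coquelicot Require Import Coquelicot.
Open Scope R_scope.

Lemma sum_nonneg (f : nat -> R) n : (forall i, (i <= n)%nat -> 0 <= f i) -> 0 <= sum_f_R0 f n.
Proof.
  induction n; intros H; simpl.
  - apply H; lia.
  - assert (0 <= f (S n)) by (apply H; lia).
    assert (0 <= sum_f_R0 f n) by (apply IHn; intros; apply H; lia). lra.
Qed.

Lemma sum_mono_n (f : nat -> R) m n : (forall i, (i <= n)%nat -> 0 <= f i) -> (m <= n)%nat ->
  sum_f_R0 f m <= sum_f_R0 f n.
Proof.
  intros H Hmn. induction Hmn.
  - lra.
  - simpl. assert (0 <= f (S m0)) by (apply H; lia).
    assert (sum_f_R0 f m <= sum_f_R0 f m0) by (apply IHHmn; intros; apply H; lia). lra.
Qed.

Lemma sum_term_le (f : nat -> R) n k : (forall i, (i <= n)%nat -> 0 <= f i) -> (k <= n)%nat ->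
  f k <= sum_f_R0 f n.
Proof.
  intros H Hk. destruct k.
  - apply Rle_trans with (sum_f_R0 f 0). simpl; lra. apply sum_mono_n; auto; lia.
  - apply Rle_trans with (sum_f_R0 f (S k)).
    + simpl. assert (0 <= sum_f_R0 f k) by (apply sum_nonneg; intros; apply H; lia). lra.
    + apply sum_mono_n; auto.
Qed.

Lemma sum_shift_le (f : nat -> R) k N n : (forall i, (i <= n)%nat -> 0 <= f i) -> (k + N <= n)%nat ->
  sum_f_R0 (fun i => f (k + i)%nat) N <= sum_f_R0 f n.
Proof.
  intros H Hk. destruct k.
  - simpl. apply sum_mono_n; auto; lia.
  - apply Rle_trans with (sum_f_R0 f (S k + N)); [| apply sum_mono_n; auto].
    rewrite (tech2 f k (S k + N)) by lia.
    replace (S k + N - S k)%nat with N by lia.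
    assert (0 <= sum_f_R0 f k) by (apply sum_nonneg; intros; apply H; lia). lra.
Qed.

Fixpoint lastzero (y : nat -> R) (n : nat) : nat :=
  match n with
  | O => O
  | S k => if Req_EM_T (y (S k)) 0 then S k else lastzero y k
  end.

Lemma lastzero_le y n : (lastzero y n <= n)%nat.
Proof. induction n; simpl; [lia|]. destruct (Req_EM_T _ _); lia. Qed.

Lemma lastzero_zero y n : lastzero y n = O \/ y (lastzero y n) = 0.
Proof. induction n; simpl; [auto|]. destruct (Req_EM_T _ _); auto. Qed.

Lemma lastzero_nz y n j : (lastzero y n < j <= n)%nat -> y j <> 0.
Proof.
  induction n; simpl; intros Hj; [lia|].
  destruct (Req_EM_T _ _) as [E|E].
  - lia.
  - destruct (Nat.eq_dec j (S n)) as [->|Hne]; auto.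
    apply IHn; lia.
Qed.

Fixpoint Wf (c : nat) (lam d : R) (y : nat -> R) (m j : nat) : R :=
  match j with
  | O => if (0 <? m)%nat then 0 else 1
  | S k => if (S k <? m)%nat then 0 else if (S k =? m)%nat then 1
           else Wf c lam d y m k * (INR (c - S k + 1) / (d * lam * y (S k)))
  end.

Lemma Wf_lt c lam d y m j : (j < m)%nat -> Wf c lam d y m j = 0.
Proof.
  intros H; destruct j.
  - simpl. replace (0 <? m)%nat with true; auto. symmetry; apply Nat.ltb_lt; lia.
  - change (Wf c lam d y m (S j)) with (if (S j <? m)%nat then 0 else if (S j =? m)%nat then 1
           else Wf c lam d y m j * (INR (c - S j + 1) / (d * lam * y (S j)))).
    replace (S j <? m)%nat with true; auto. symmetry; apply Nat.ltb_lt; lia.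
Qed.

Lemma Wf_eq c lam d y m : Wf c lam d y m m = 1.
Proof.
  destruct m; simpl; auto.
  replace (S m <? S m)%nat with false by (symmetry; apply Nat.ltb_ge; lia).
  rewrite Nat.eqb_refl; auto.
Qed.

Lemma Wf_gt c lam d y m j : (m < S j)%nat ->
  Wf c lam d y m (S j) = Wf c lam d y m j * (INR (c - S j + 1) / (d * lam * y (S j))).
Proof.
  intros H.
  change (Wf c lam d y m (S j)) with (if (S j <? m)%nat then 0 else if (S j =? m)%nat then 1
           else Wf c lam d y m j * (INR (c - S j + 1) / (d * lam * y (S j)))).
  replace (S j <? m)%nat with false by (symmetry; apply Nat.ltb_ge; lia).
  replace (S j =? m)%nat with false by (symmetry; apply Nat.eqb_neq; lia). auto.
Qed.

Lemma steady_exists c lam d y : (1 <= c)%nat -> 0 < lam -> 0 < d -> policy c y ->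
  exists pi, is_steady_state c lam d y pi.
Proof.
  intros Hc Hl Hd Hp.
  set (m := lastzero y c).
  assert (Hm : (m <= c)%nat) by apply lastzero_le.
  assert (Hypos : forall j, (m < j <= c)%nat -> 0 < y j).
  { intros j Hj. assert (y j <> 0) by (apply lastzero_nz with c; auto).
    destruct (Hp j ltac:(lia)). lra. }
  set (W := Wf c lam d y m).
  assert (HW : forall j, (j <= c)%nat -> 0 <= W j).
  { induction j; intros Hj.
    - unfold W; simpl. destruct (0 <? m)%nat; lra.
    - destruct (Nat.lt_ge_cases (S j) m).
      + unfold W; rewrite Wf_lt; auto; lra.
      + destruct (Nat.eq_dec (S j) m) as [E|E].
        * unfold W; rewrite E, Wf_eq; lra.
        * unfold W; rewrite Wf_gt by lia. fold W.
          apply Rmult_le_pos; [apply IHj; lia|].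
          apply Rmult_le_pos; [apply pos_INR|].
          apply Rlt_le, Rinv_0_lt_compat.
          apply Rmult_lt_0_compat; [nra|]. apply Hypos; lia. }
  set (Z := sum_f_R0 W c).
  assert (HZ : 1 <= Z).
  { unfold Z. rewrite <- (Wf_eq c lam d y m). apply sum_term_le; auto. }
  exists (fun j => W j / Z). split; [|split].
  - intros j Hj. apply Rmult_le_pos; [auto|]. apply Rlt_le, Rinv_0_lt_compat; lra.
  - unfold Rdiv.
    rewrite <- scal_sum. fold Z. field. lra.
  - intros j Hj.
    destruct (Nat.lt_ge_cases j m).
    + unfold W; rewrite !Wf_lt by lia. unfold Rdiv; ring.
    + destruct (Nat.eq_dec j m) as [E|E].
      * destruct (lastzero_zero y c) as [E0|E0]; [fold m in E0; lia|].
        fold m in E0. rewrite E, E0.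
        unfold W; rewrite (Wf_lt c lam d y m (m-1)) by lia. unfold Rdiv; ring.
      * destruct j as [|j]; [lia|].
        unfold W; rewrite Wf_gt by lia. fold W.
        replace (S j - 1)%nat with j by lia.
        assert (0 < y (S j)) by (apply Hypos; lia).
        field. repeat split; lra.
Qed.

Lemma ss_spec c lam d y : (1 <= c)%nat -> 0 < lam -> 0 < d -> policy c y ->
  is_steady_state c lam d y (steady_state c lam d y).
Proof.
  intros. unfold steady_state. apply epsilon_spec. apply steady_exists; auto.
Qed.

Lemma sum_lin (u v : nat -> R) a b n :
  sum_f_R0 (fun i => a * u i + b * v i) n = a * sum_f_R0 u n + b * sum_f_R0 v n.
Proof. induction n; simpl; [ring|]. rewrite IHn; ring. Qed.

Lemma INR_cj c j : (1 <= j <= c)%nat -> INR (c - j + 1) = INR c - INR j + 1.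
Proof.
  intros H. assert (E : (c - j + 1 + j = c + 1)%nat) by lia.
  apply (f_equal INR) in E. rewrite !plus_INR in E. rewrite plus_INR. simpl in *. lra.
Qed.

Lemma sum_f_1 c (F : nat -> R) : (1 <= c)%nat ->
  sum_f 1 c F = sum_f_R0 (fun i => F (S i)) (c - 1).
Proof.
  intros Hc. unfold sum_f. apply sum_eq. intros i _. f_equal. lia.
Qed.

Lemma sum_split0 c (F : nat -> R) : (1 <= c)%nat ->
  sum_f_R0 F c = F O + sum_f_R0 (fun i => F (S i)) (c - 1).
Proof. intros Hc. rewrite decomp_sum by lia. f_equal. f_equal. lia. Qed.

Lemma sum_last c (F : nat -> R) : (1 <= c)%nat ->
  sum_f_R0 F c = sum_f_R0 F (c - 1) + F c.
Proof. intros Hc. replace c with (S (c - 1)) at 1 by lia. simpl. f_equal. f_equal. lia. Qed.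

Section Loss.
Variables (c : nat) (lam d xs : R) (y pi : nat -> R).
Hypothesis Hc : (1 <= c)%nat.
Hypothesis Hd : 0 < d.
Hypothesis Hlam : lam * xs * d = INR c.
Hypothesis Hss : is_steady_state c lam d y pi.

Definition Am := sum_f_R0 (fun j => INR j * pi j) c.

Lemma throughput : lam * sum_f_R0 (fun i => pi (S i) * y (S i)) (c - 1) = (INR c - Am) / d.
Proof.
  destruct Hss as [Hp [Hs Hb]].
  rewrite scal_sum.
  rewrite (sum_eq _ (fun i => pi i * (INR c - INR i) / d)).
  2:{ intros i Hi. assert (E : INR (c - S i + 1) = INR c - INR i) by (rewrite INR_cj, S_INR by lia; ring).
      rewrite <- E. replace (pi (S i) * y (S i) * lam) with (pi (S i) * lam * y (S i)) by ring.
      rewrite Hb by lia. replace (S i - 1)%nat with i by lia. ring. }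
  assert (E : sum_f_R0 (fun i => pi i * (INR c - INR i) / d) c =
              sum_f_R0 (fun i => pi i * (INR c - INR i) / d) (c - 1)).
  { rewrite sum_last by auto. replace (INR c - INR c) with 0 by ring. unfold Rdiv. rewrite Rmult_0_r, Rmult_0_l. lra. }
  rewrite <- E. unfold Am.
  rewrite (sum_eq _ (fun i => (INR c / d) * pi i + (- / d) * (INR i * pi i))).
  2:{ intros; field; lra. }
  rewrite sum_lin, Hs. field. lra.
Qed.

Definition hfun (g : R -> R) (s z : R) := g xs + s * (z - xs) - g z.

Lemma loss_identity (g : R -> R) (s : R) : g 0 = 0 ->
  lam * g xs - sum_f 1 c (fun j => pi j * lam * g (y j)) =
  lam * (pi O * hfun g s 0 + sum_f_R0 (fun i => pi (S i) * hfun g s (y (S i))) (c - 1))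
  + s * Am / d.
Proof.
  intros Hg0.
  pose proof throughput as Ht.
  destruct Hss as [Hp [Hs Hb]].
  rewrite sum_f_1 by auto.
  rewrite (sum_split0 c pi Hc) in Hs.
  set (P1 := sum_f_R0 (fun i => pi (S i)) (c - 1)) in *.
  set (Y := sum_f_R0 (fun i => pi (S i) * y (S i)) (c - 1)) in *.
  set (G := sum_f_R0 (fun i => pi (S i) * g (y (S i))) (c - 1)).
  assert (E1 : sum_f_R0 (fun i => pi (S i) * lam * g (y (S i))) (c - 1) = lam * G).
  { unfold G. rewrite scal_sum. apply sum_eq; intros; ring. }
  assert (E2 : sum_f_R0 (fun i => pi (S i) * hfun g s (y (S i))) (c - 1) =
               (g xs - s * xs) * P1 + s * Y - G).
  { unfold P1, Y, G. rewrite <- sum_lin.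
    rewrite <- minus_sum. apply sum_eq. intros; unfold hfun; ring. }
  rewrite E1, E2. unfold hfun. rewrite Hg0.
  assert (lam * xs = INR c / d) by (field_simplify_eq; [lra|lra]).
  assert (HY : lam * Y = (INR c - Am) / d) by exact Ht.
  apply Rminus_diag_uniq.
  replace (lam * g xs - lam * G -
   (lam * (pi 0%nat * (g xs + s * (0 - xs) - 0) + ((g xs - s * xs) * P1 + s * Y - G)) +
    s * Am / d)) with (lam * g xs * (1 - pi 0%nat - P1) - s * (lam * Y) + s * (lam * xs) * (pi 0%nat + P1) - s * Am / d) by ring.
  rewrite HY, H. replace (pi 0%nat + P1) with 1 by lra. replace (1 - pi 0%nat - P1) with 0 by lra. unfold Rdiv. ring.
Qed.
End Loss.

Lemma sum_INR_id N : sum_f_R0 (fun i => INR i) N = INR N * (INR N + 1) / 2.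
Proof. induction N; cbn [sum_f_R0]; [rewrite INR_0; field|]. rewrite IHN, S_INR. field. Qed.

Section Chain.
Variables (c : nat) (lam d xs : R) (y pi : nat -> R).
Hypothesis Hc : (1 <= c)%nat.
Hypothesis Hd : 0 < d.
Hypothesis Hxs : 0 < xs.
Hypothesis Hlam : lam * xs * d = INR c.
Hypothesis Hss : is_steady_state c lam d y pi.

Fixpoint Pf (n : nat) : R :=
  match n with
  | O => 0
  | S n => Pf n + pi (S n) * Rabs (y (S n) - xs) / xs + INR n * pi n / INR c
  end.

Lemma Hcpos : 0 < INR c.
Proof. apply lt_0_INR; lia. Qed.

Lemma Pf_mono n m : (n <= m <= c)%nat -> Pf n <= Pf m.
Proof.
  destruct Hss as [Hp _]. pose proof Hcpos.
  intros [H1 H2]. induction H1 as [|m0 H1 IHle]; [lra|].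
  cbn [Pf]. assert (0 <= pi (S m0)) by (apply Hp; lia).
  assert (0 <= pi m0) by (apply Hp; lia).
  assert (0 <= pi (S m0) * Rabs (y (S m0) - xs) / xs).
  { apply Rmult_le_pos; [apply Rmult_le_pos; auto; apply Rabs_pos|]. apply Rlt_le, Rinv_0_lt_compat; auto. }
  assert (0 <= INR m0 * pi m0 / INR c).
  { apply Rmult_le_pos; [apply Rmult_le_pos; auto; apply pos_INR|]. apply Rlt_le, Rinv_0_lt_compat; auto. }
  assert (Pf n <= Pf m0) by (apply IHle; lia). lra.
Qed.

Lemma Q_step n : (S n <= c)%nat -> pi n + Pf n <= pi (S n) + Pf (S n).
Proof.
  destruct Hss as [Hp [_ Hb]]. pose proof Hcpos.
  intros Hn. cbn [Pf].
  specialize (Hb (S n) ltac:(lia)). replace (S n - 1)%nat with n in Hb by lia.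
  rewrite INR_cj in Hb by lia. rewrite S_INR in Hb.
  assert (E : xs * pi n = pi (S n) * y (S n) + xs * INR n * pi n / INR c).
  { assert (Hb' : pi (S n) * lam * y (S n) * d = pi n * (INR c - (INR n + 1) + 1)) by (rewrite Hb; field; lra).
    apply (Rmult_eq_reg_l (INR c)); [|lra].
    replace (INR c * (pi (S n) * y (S n) + xs * INR n * pi n / INR c)) with (INR c * pi (S n) * y (S n) + xs * INR n * pi n) by (field; lra).
    rewrite <- Hlam. replace (lam * xs * d * pi (S n) * y (S n)) with (xs * (pi (S n) * lam * y (S n) * d)) by ring.
    rewrite Hb'. rewrite <- Hlam. ring. }
  assert (0 <= pi (S n)) by (apply Hp; lia).
  assert (pi (S n) * y (S n) <= pi (S n) * (xs + Rabs (y (S n) - xs))).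
  { apply Rmult_le_compat_l; auto. pose proof (Rle_abs (y (S n) - xs)). lra. }
  assert (xs * pi n <= xs * (pi (S n) + pi (S n) * Rabs (y (S n) - xs) / xs + INR n * pi n / INR c)).
  { replace (xs * (pi (S n) + pi (S n) * Rabs (y (S n) - xs) / xs + INR n * pi n / INR c))
      with (pi (S n) * (xs + Rabs (y (S n) - xs)) + xs * INR n * pi n / INR c) by (field; lra).
    lra. }
  apply Rmult_le_reg_l in H2; auto. lra.
Qed.

Lemma chain k n : (k <= n <= c)%nat -> pi k - Pf c <= pi n.
Proof.
  intros [H1 H2].
  assert (pi k + Pf k <= pi n + Pf n).
  { induction H1 as [|m H1 IHle]; [lra|]. pose proof (Q_step m ltac:(lia)). assert (pi k + Pf k <= pi m + Pf m) by (apply IHle; lia). lra. }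
  assert (0 <= Pf k) by (apply (Pf_mono 0 k); lia).
  assert (Pf n <= Pf c) by (apply Pf_mono; lia). lra.
Qed.

Definition Tm := sum_f_R0 (fun i => pi (S i) * Rabs (y (S i) - xs)) (c - 1).

Lemma Pf_closed n : Pf (S n) = (/ xs) * sum_f_R0 (fun i => pi (S i) * Rabs (y (S i) - xs)) n
                            + (/ INR c) * sum_f_R0 (fun i => INR i * pi i) n.
Proof.
  pose proof Hcpos. induction n.
  - cbn [Pf sum_f_R0]. rewrite INR_0. field. lra.
  - change (Pf (S (S n))) with (Pf (S n) + pi (S (S n)) * Rabs (y (S (S n)) - xs) / xs + INR (S n) * pi (S n) / INR c).
    rewrite IHn. cbn [sum_f_R0]. field. lra.
Qed.

Lemma Pf_bound : Pf c <= Tm / xs + Am c pi / INR c.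
Proof.
  destruct Hss as [Hp _]. pose proof Hcpos.
  replace c with (S (c - 1)) at 1 by lia. rewrite Pf_closed. unfold Tm, Am.
  assert (sum_f_R0 (fun i => INR i * pi i) (c - 1) <= sum_f_R0 (fun i => INR i * pi i) c).
  { apply sum_mono_n; [|lia]. intros; apply Rmult_le_pos; [apply pos_INR|apply Hp; lia]. }
  unfold Rdiv. rewrite (Rmult_comm _ (/ xs)), (Rmult_comm _ (/ INR c)).
  assert (0 < / INR c) by (apply Rinv_0_lt_compat; lra).
  nra.
Qed.

Lemma window N k : (k <= N)%nat -> (N + N <= c)%nat ->
  (pi k - Pf c) * (INR N * (INR N + 1) / 2) <= Am c pi.
Proof.
  destruct Hss as [Hp _]. intros Hk HN.
  rewrite <- sum_INR_id. rewrite scal_sum.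
  apply Rle_trans with (sum_f_R0 (fun i => INR (k + i) * pi (k + i)%nat) N).
  - apply sum_Rle. intros i Hi.
    assert (pi k - Pf c <= pi (k + i)%nat) by (apply chain; lia).
    assert (0 <= pi (k + i)%nat) by (apply Hp; lia).
    assert (INR i <= INR (k + i)) by (apply le_INR; lia).
    pose proof (pos_INR i). nra.
  - unfold Am. apply (sum_shift_le (fun j => INR j * pi j)); [|lia].
    intros; apply Rmult_le_pos; [apply pos_INR|apply Hp; lia].
Qed.

Lemma mass N : (N < c)%nat -> 1 <= sum_f_R0 pi N + Am c pi / (INR N + 1).
Proof.
  destruct Hss as [Hp [Hs _]]. intros HN.
  rewrite (tech2 pi N c HN) in Hs.
  assert (sum_f_R0 (fun i => pi (S N + i)%nat) (c - S N) * (INR N + 1) <= Am c pi).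
  { rewrite Rmult_comm, scal_sum.
    apply Rle_trans with (sum_f_R0 (fun i => INR (S N + i) * pi (S N + i)%nat) (c - S N)).
    - apply sum_Rle; intros i Hi. assert (0 <= pi (S N + i)%nat) by (apply Hp; lia).
      assert (INR N + 1 <= INR (S N + i)) by (rewrite <- S_INR; apply le_INR; lia). nra.
    - unfold Am. apply (sum_shift_le (fun j => INR j * pi j)); [|lia].
      intros; apply Rmult_le_pos; [apply pos_INR|apply Hp; lia]. }
  pose proof (pos_INR N).
  assert (sum_f_R0 (fun i => pi (S N + i)%nat) (c - S N) <= Am c pi / (INR N + 1)).
  { apply Rmult_le_reg_r with (INR N + 1); [lra|]. unfold Rdiv. rewrite Rmult_assoc, Rinv_l; lra. }
  lra.
Qed.

Lemma combine N : (1 <= N)%nat -> (N + N <= c)%nat ->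
  1 <= (INR N + 1) * Pf c + 2 * Am c pi / INR N + Am c pi / (INR N + 1).
Proof.
  intros H1 H2. pose proof (mass N ltac:(lia)).
  assert (HN : 1 <= INR N) by (apply (le_INR 1); auto).
  assert (sum_f_R0 pi N <= sum_f_R0 (fun _ => Pf c + 2 * Am c pi / (INR N * (INR N + 1))) N).
  { apply sum_Rle. intros k Hk. pose proof (window N k Hk H2).
    assert (0 < INR N * (INR N + 1)) by nra.
    apply Rmult_le_reg_r with (INR N * (INR N + 1) / 2); [lra|].
    replace ((Pf c + 2 * Am c pi / (INR N * (INR N + 1))) * (INR N * (INR N + 1) / 2))
      with (Pf c * (INR N * (INR N + 1) / 2) + Am c pi) by (field; lra).
    nra. }
  rewrite sum_cte, S_INR in H0.
  replace ((Pf c + 2 * Am c pi / (INR N * (INR N + 1))) * (INR N + 1))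
    with ((INR N + 1) * Pf c + 2 * Am c pi / INR N) in H0 by (field; lra).
  lra.
Qed.
End Chain.

Lemma Rabs_le_betw x a : Rabs x <= a -> - a <= x <= a.
Proof. intros H. pose proof (Rle_abs x). pose proof (Rle_abs (- x)). rewrite Rabs_Ropp in H1. lra. Qed.

Lemma rpow_pos_eq x a : 0 < x -> rpow x a = Rpower x a.
Proof. intros H. unfold rpow. destruct (Rlt_dec 0 x); [auto|lra]. Qed.

Lemma Rpower_pos x a : 0 < Rpower x a.
Proof. unfold Rpower. apply exp_pos. Qed.

Lemma Rpower_inv x a : 0 < x -> Rpower (/ x) a = / Rpower x a.
Proof. intros H. unfold Rpower. rewrite ln_Rinv by auto. rewrite <- exp_Ropp. f_equal. ring. Qed.

Lemma h_nonneg g xs s z : supergradient g xs s -> 0 <= z <= 1 -> 0 <= hfun xs g s z.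
Proof. intros Hsg Hz. unfold hfun. pose proof (Hsg z Hz). lra. Qed.

Lemma curv g xs s eps k2 alpha :
  reward_function g -> supergradient g xs s -> 0 < xs < 1 -> 0 < eps -> eps < Rmin xs (1 - xs) -> 0 < k2 ->
  (forall x, xs - eps <= x <= xs + eps -> g x <= g xs + s * (x - xs) - k2 * rpow (Rabs (x - xs)) alpha) ->
  forall eta z, 0 < eta <= eps -> 0 <= z <= 1 ->
  Rabs (z - xs) <= eta + hfun xs g s z * eta / (k2 * Rpower eta alpha).
Proof.
  intros [Hg0 [Hmon Hcc]] Hsg Hxs Heps Hepsm Hk2 Hloc eta z Heta Hz.
  pose proof (Rmin_l xs (1 - xs)). pose proof (Rmin_r xs (1 - xs)).
  pose proof (h_nonneg g xs s z Hsg Hz) as Hh.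
  pose proof (Rpower_pos eta alpha) as HR.
  assert (0 <= hfun xs g s z * eta / (k2 * Rpower eta alpha)).
  { apply Rmult_le_pos; [nra|]. apply Rlt_le, Rinv_0_lt_compat; nra. }
  set (t := Rabs (z - xs)).
  destruct (Rle_dec t eta) as [Hle|Hgt]; [lra|].
  apply Rnot_le_lt in Hgt.
  set (tau := eta / t).
  assert (Ht0 : 0 < t) by lra.
  assert (Htau : 0 < tau < 1).
  { unfold tau. split; [apply Rdiv_lt_0_compat; lra|]. apply Rmult_lt_reg_r with t; auto.
    unfold Rdiv. rewrite Rmult_assoc, Rinv_l; lra. }
  set (w := tau * z + (1 - tau) * xs).
  assert (Hw : w - xs = tau * (z - xs)) by (unfold w; ring).
  assert (Haw : Rabs (w - xs) = eta).
  { rewrite Hw, Rabs_mult, (Rabs_pos_eq tau) by lra. fold t. unfold tau. field. lra. }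
  assert (Hwr : xs - eps <= w <= xs + eps).
  { pose proof (Rabs_le_betw (w - xs) eps ltac:(lra)). lra. }
  pose proof (Hloc w Hwr) as Hl. rewrite Haw, rpow_pos_eq in Hl by lra.
  pose proof (Hcc z xs tau Hz ltac:(lra) ltac:(lra)) as Hc. fold w in Hc.
  assert (k2 * Rpower eta alpha <= tau * hfun xs g s z).
  { unfold hfun. rewrite Hw in Hl. nra. }
  unfold tau in H2.
  assert (k2 * Rpower eta alpha * t <= eta * hfun xs g s z).
  { apply Rmult_le_compat_r with (r := t) in H2; [|lra].
    replace (eta / t * hfun xs g s z * t) with (eta * hfun xs g s z) in H2 by (field; lra). lra. }
  assert (t <= hfun xs g s z * eta / (k2 * Rpower eta alpha)).
  { apply Rmult_le_reg_r with (k2 * Rpower eta alpha); [nra|].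
    replace (hfun xs g s z * eta / (k2 * Rpower eta alpha) * (k2 * Rpower eta alpha))
      with (eta * hfun xs g s z) by (field; nra). lra. }
  lra.
Qed.

Lemma div_lt_iff a b c : 0 < c -> (a / c < b <-> a < b * c).
Proof. intros Hc. split; intros H.
  - apply Rmult_lt_compat_r with (r := c) in H; auto. unfold Rdiv in H. rewrite Rmult_assoc, Rinv_l in H; lra.
  - apply Rmult_lt_reg_r with c; auto. unfold Rdiv. rewrite Rmult_assoc, Rinv_l; lra. Qed.

Lemma div_le_iff a b c : 0 < c -> (a / c <= b <-> a <= b * c).
Proof. intros Hc. split; intros H.
  - apply Rmult_le_compat_r with (r := c) in H; [|lra]. unfold Rdiv in H. rewrite Rmult_assoc, Rinv_l in H; lra.
  - apply Rmult_le_reg_r with c; auto. unfold Rdiv. rewrite Rmult_assoc, Rinv_l; lra. Qed.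

Lemma nat_of_up gam : 0 < gam -> exists N : nat, gam < INR N <= gam + 1.
Proof.
  intros H. destruct (archimed gam) as [H1 H2].
  assert (0 <= up gam)%Z. { apply le_IZR. lra. }
  exists (Z.to_nat (up gam)). rewrite INR_IZR_INZ, Z2Nat.id by auto. lra.
Qed.

Lemma lower_policy c lam d xs alpha g s eps k2 gam y pi :
  (1 <= c)%nat -> 0 < d -> 0 < xs < 1 -> lam * xs * d = INR c ->
  reward_function g -> 0 < s -> supergradient g xs s -> 0 < eps -> eps < Rmin xs (1 - xs) -> 0 < k2 ->
  (forall x, xs - eps <= x <= xs + eps -> g x <= g xs + s * (x - xs) - k2 * rpow (Rabs (x - xs)) alpha) ->
  1 <= gam -> 4 * gam <= INR c -> gam * gam <= INR c -> Rpower gam alpha * gam = INR c ->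
  xs / 18 / gam <= eps ->
  policy c y -> is_steady_state c lam d y pi ->
  Rmin (s / (18 * d)) (k2 * Rpower (xs / 18) alpha / (xs / 18) / (18 * d)) * gam <=
  lam * g xs - sum_f 1 c (fun j => pi j * lam * g (y j)).
Proof.
  intros Hc Hd Hxs Hlam Hrw Hs Hsg Heps Hepsm Hk2 Hloc Hg1 Hg4 Hg2 Hpow Heta Hpol Hss.
  pose proof Hrw as [Hg0 _].
  rewrite (loss_identity c lam d xs y pi Hc Hd Hlam Hss g s Hg0).
  pose proof Hss as [Hp [Hsum Hb]].
  assert (Hcpos : 0 < INR c) by (apply lt_0_INR; lia).
  assert (Hlampos : 0 < lam).
  { destruct (Rle_lt_dec lam 0); auto. assert (lam * xs * d <= 0).
    { apply Rmult_le_0_r; [|lra]. apply Rmult_le_0_r; lra. } lra. }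
  set (kap := xs / 18).
  set (P := k2 * Rpower kap alpha / kap).
  set (K1 := Rmin (s / (18 * d)) (P / (18 * d))).
  set (Hs_ := pi 0%nat * hfun xs g s 0 + sum_f_R0 (fun i => pi (S i) * hfun xs g s (y (S i))) (c - 1)).
  set (SH := sum_f_R0 (fun i => pi (S i) * hfun xs g s (y (S i))) (c - 1)) in Hs_.
  assert (HSH : 0 <= SH).
  { apply sum_nonneg. intros i Hi. apply Rmult_le_pos; [apply Hp; lia|].
    apply h_nonneg; auto. apply Hpol; lia. }
  assert (Hh0 : 0 <= pi 0%nat * hfun xs g s 0).
  { apply Rmult_le_pos; [apply Hp; lia|]. apply h_nonneg; auto; lra. }
  assert (HAm : 0 <= Am c pi).
  { apply sum_nonneg. intros; apply Rmult_le_pos; [apply pos_INR|apply Hp; lia]. }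
  assert (Hkap : 0 < kap) by (unfold kap; lra).
  assert (HP : 0 < P) by (unfold P; apply Rdiv_lt_0_compat; [apply Rmult_lt_0_compat; [lra|apply Rpower_pos]|lra]).
  fold kap P K1. fold Hs_.
  apply Rnot_lt_le. intros Hcon.
  assert (HK1a : K1 <= s / (18 * d)) by apply Rmin_l.
  assert (HK1b : K1 <= P / (18 * d)) by apply Rmin_r.
  assert (Hsd : 0 <= s * Am c pi / d) by (apply Rmult_le_pos; [nra|apply Rlt_le, Rinv_0_lt_compat; lra]).
  assert (HlH : 0 <= lam * Hs_) by (unfold Hs_; nra).
  assert (HA : Am c pi < gam / 18).
  { assert (s * Am c pi / d < s / (18 * d) * gam) by nra.
    replace (s * Am c pi / d) with ((s / d) * Am c pi) in H by (field; lra).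
    replace (s / (18 * d) * gam) with ((s / d) * (gam / 18)) in H by (field; lra).
    apply Rmult_lt_reg_l in H; auto. apply Rdiv_lt_0_compat; lra. }
  assert (HH : lam * Hs_ < P / (18 * d) * gam) by nra.
  set (eta := kap / gam).
  assert (Hetapos : 0 < eta) by (unfold eta; apply Rdiv_lt_0_compat; lra).
  assert (HRg : Rpower gam alpha = INR c / gam) by (apply (Rmult_eq_reg_r gam); [rewrite Hpow; field|]; lra).
  assert (HReta : Rpower eta alpha = Rpower kap alpha * gam / INR c).
  { unfold eta, Rdiv. rewrite <- Rpower_mult_distr by (try apply Rinv_0_lt_compat; lra).
    rewrite Rpower_inv, HRg by lra. field. lra. }
  assert (Hq : eta / (k2 * Rpower eta alpha) = INR c / (P * gam * gam)).
  { rewrite HReta. unfold eta, P. field. repeat split; try lra. pose proof (Rpower_pos kap alpha). lra. }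
  assert (HT : Tm c xs y pi <= eta + Hs_ * (INR c / (P * gam * gam))).
  { unfold Tm.
    apply Rle_trans with (sum_f_R0 (fun i => eta * pi (S i) + (eta / (k2 * Rpower eta alpha)) * (pi (S i) * hfun xs g s (y (S i)))) (c - 1)).
    - apply sum_Rle. intros i Hi.
      assert (Hy : 0 <= y (S i) <= 1) by (apply Hpol; lia).
      pose proof (curv g xs s eps k2 alpha Hrw Hsg Hxs Heps Hepsm Hk2 Hloc eta (y (S i)) ltac:(split; [auto|unfold eta, kap; lra]) Hy).
      assert (0 <= pi (S i)) by (apply Hp; lia).
      apply Rmult_le_compat_l with (r := pi (S i)) in H; auto.
      replace (eta * pi (S i) + eta / (k2 * Rpower eta alpha) * (pi (S i) * hfun xs g s (y (S i))))
        with (pi (S i) * (eta + hfun xs g s (y (S i)) * eta / (k2 * Rpower eta alpha))); [lra|].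
      field. pose proof (Rpower_pos eta alpha). nra.
    - rewrite sum_lin. fold SH. rewrite Hq.
      rewrite (sum_split0 c pi Hc) in Hsum.
      assert (0 <= pi 0%nat) by (apply Hp; lia).
      assert (0 <= INR c / (P * gam * gam)) by (apply Rlt_le, Rdiv_lt_0_compat; [lra|]; apply Rmult_lt_0_compat; nra).
      unfold Hs_. nra. }
  assert (HT2 : Hs_ * (INR c / (P * gam * gam)) < xs / (18 * gam)).
  { assert (Hl : lam = INR c / (xs * d)) by (field_simplify_eq; lra).
    rewrite Hl in HH.
    replace (Hs_ * (INR c / (P * gam * gam))) with ((INR c / (xs * d) * Hs_) * (xs * d / (P * gam * gam))) by (field; repeat split; lra).
    apply Rlt_le_trans with (P / (18 * d) * gam * (xs * d / (P * gam * gam))).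
    - apply Rmult_lt_compat_r; auto. apply Rdiv_lt_0_compat; [nra|]. apply Rmult_lt_0_compat; nra.
    - right. field. repeat split; lra. }
  assert (HTm : Tm c xs y pi < xs / (9 * gam)).
  { replace (xs / (9 * gam)) with (eta + xs / (18 * gam)) by (unfold eta, kap; field; lra). lra. }
  pose proof (Pf_bound c lam d xs y pi Hc ltac:(lra) Hss) as HPf.
  assert (HPf0 : 0 <= Pf c xs y pi 0) by (simpl; lra).
  assert (HPfnn : 0 <= Pf c xs y pi c).
  { rewrite <- (Rle_trans _ _ _ HPf0 (Pf_mono c lam d xs y pi Hc ltac:(lra) Hss 0 c ltac:(lia))). lra. }
  assert (HPf2 : Pf c xs y pi c < 1 / (6 * gam)).
  { assert (Tm c xs y pi / xs < 1 / (9 * gam)).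
    { apply div_lt_iff; [lra|]. replace (1 / (9 * gam) * xs) with (xs / (9 * gam)) by (field; lra). auto. }
    assert (Am c pi / INR c <= 1 / (18 * gam)).
    { apply div_le_iff; auto.
      apply Rle_trans with (gam / 18); [lra|].
      replace (1 / (18 * gam) * INR c) with (INR c / gam / 18) by (field; lra).
      apply Rmult_le_compat_r; [lra|]. apply (Rmult_le_reg_r gam); [lra|].
      replace (INR c / gam * gam) with (INR c) by (field; lra). lra. }
    replace (1 / (6 * gam)) with (1 / (9 * gam) + 1 / (18 * gam)) by (field; lra). lra. }
  destruct (nat_of_up gam ltac:(lra)) as [N [HN1 HN2]].
  assert (HN1' : (1 <= N)%nat).
  { destruct N; [simpl in HN1; lra|lia]. }
  assert (HNN : (N + N <= c)%nat).
  { apply INR_le. rewrite plus_INR. lra. }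
  pose proof (combine c lam d xs y pi Hc Hd ltac:(lra) Hlam Hss N HN1' HNN) as Hcomb.
  assert (Ha1 : (INR N + 1) * Pf c xs y pi c <= 3 * gam * Pf c xs y pi c) by nra.
  assert (Ha2 : 3 * gam * Pf c xs y pi c < 1 / 2).
  { apply Rlt_le_trans with (3 * gam * (1 / (6 * gam))); [apply Rmult_lt_compat_l; lra|].
    right; field; lra. }
  assert (Ha3 : 2 * Am c pi / INR N < 1 / 9).
  { apply div_lt_iff; [lra|]. nra. }
  assert (Ha4 : Am c pi / (INR N + 1) < 1 / 18).
  { apply div_lt_iff; [lra|]. nra. }
  lra.
Qed.

Lemma bal' c lam d xs y pi : 0 < d -> lam * xs * d = INR c -> is_steady_state c lam d y pi ->
  forall j, (1 <= j <= c)%nat -> pi j * y j * INR c = pi (j - 1)%nat * INR (c - j + 1) * xs.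
Proof.
  intros Hd Hlam [_ [_ Hb]] j Hj. rewrite <- Hlam.
  replace (pi j * y j * (lam * xs * d)) with ((pi j * lam * y j) * (xs * d)) by ring.
  rewrite Hb by auto. field. lra.
Qed.

Section TP.
Variables (c : nat) (lam d xs delta : R) (tau : nat) (pi : nat -> R).
Hypothesis Hc : (1 <= c)%nat.
Hypothesis Hd : 0 < d.
Hypothesis Hxs : 0 < xs < 1.
Hypothesis Hlam : lam * xs * d = INR c.
Hypothesis Hdel : 0 < delta <= xs / 2.
Hypothesis Htau : (1 <= tau <= c)%nat.
Hypothesis Htc : 2 * xs * INR tau <= delta * INR c.
Hypothesis Hss : is_steady_state c lam d (two_price (xs - delta) (xs + delta) tau) pi.

Let y := two_price (xs - delta) (xs + delta) tau.
Let rho := 1 - delta / (2 * xs).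

Lemma y_low j : (j <= tau)%nat -> y j = xs - delta.
Proof. intros H. unfold y, two_price. replace (j <=? tau)%nat with true; auto. symmetry; apply Nat.leb_le; auto. Qed.
Lemma y_high j : (tau < j)%nat -> y j = xs + delta.
Proof. intros H. unfold y, two_price. replace (j <=? tau)%nat with false; auto. symmetry; apply Nat.leb_gt; auto. Qed.

Lemma step_low j : (1 <= j <= tau)%nat -> pi (j - 1)%nat <= rho * pi j.
Proof.
  intros Hj. pose proof (bal' c lam d xs y pi Hd Hlam Hss j ltac:(lia)) as B.
  rewrite y_low in B by lia. rewrite INR_cj in B by lia.
  destruct Hss as [Hp _].
  assert (0 <= pi j) by (apply Hp; lia). assert (0 <= pi (j - 1)%nat) by (apply Hp; lia).
  assert (INR j <= INR tau) by (apply le_INR; lia).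
  assert (INR tau <= INR c) by (apply le_INR; lia).
  assert (Hcp : 0 < INR c - INR tau).
  { assert (delta * INR c <= xs / 2 * INR c) by (apply Rmult_le_compat_r; [apply pos_INR| lra]).
    assert (1 <= INR tau) by (apply (le_INR 1); lia).
    assert (Hx2 : xs * (2 * INR tau) <= xs * (INR c / 2)) by lra.
    apply Rmult_le_reg_l in Hx2; lra. }
  assert (H3 : pi (j - 1)%nat * (INR c - INR tau) * xs <= pi j * (xs - delta) * INR c).
  { rewrite B. assert (INR c - INR tau <= INR c - INR j + 1) by lra.
    apply Rmult_le_compat_r; [lra|]. apply Rmult_le_compat_l; auto. }
  assert (H4 : (xs - delta) * INR c <= rho * (INR c - INR tau) * xs).
  { unfold rho. replace ((1 - delta / (2 * xs)) * (INR c - INR tau) * xs) with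
      (xs * INR c - xs * INR tau - delta * INR c / 2 + delta * INR tau / 2) by (field; lra).
    assert (0 <= delta * INR tau) by (apply Rmult_le_pos; [lra|apply pos_INR]). lra. }
  assert (pi (j - 1)%nat * ((INR c - INR tau) * xs) <= (rho * pi j) * ((INR c - INR tau) * xs)).
  { assert (pi j * (xs - delta) * INR c <= pi j * (rho * (INR c - INR tau) * xs)).
    { replace (pi j * (xs - delta) * INR c) with (pi j * ((xs - delta) * INR c)) by ring.
      apply Rmult_le_compat_l; auto. }
    nra. }
  apply Rmult_le_reg_r in H5; auto. nra.
Qed.

Lemma pi0_bound : pi O <= rho ^ tau.
Proof.
  destruct Hss as [Hp [Hs _]].
  assert (Hrho : 0 <= rho).
  { unfold rho. assert (delta / (2 * xs) <= 1 / 4) by (apply div_le_iff; lra). lra. }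
  assert (forall k, (k <= tau)%nat -> pi (tau - k)%nat <= rho ^ k * pi tau).
  { induction k; intros Hk.
    - replace (tau - 0)%nat with tau by lia. simpl; lra.
    - pose proof (step_low (tau - k) ltac:(lia)). replace (tau - k - 1)%nat with (tau - S k)%nat in H by lia.
      assert (pi (tau - k)%nat <= rho ^ k * pi tau) by (apply IHk; lia).
      simpl. nra. }
  specialize (H tau (le_n _)). replace (tau - tau)%nat with O in H by lia.
  assert (pi tau <= 1) by (rewrite <- Hs; apply sum_term_le; [auto|lia]).
  pose proof (pow_le rho tau Hrho). nra.
Qed.

Let f j := Rmax 0 (INR j - INR tau).

Lemma f_step j : (1 <= j <= c)%nat -> f j * pi j <= (xs / (xs + delta)) * ((f (j - 1)%nat + 1) * pi (j - 1)%nat).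
Proof.
  intros Hj. destruct Hss as [Hp _].
  assert (0 <= pi j) by (apply Hp; lia). assert (0 <= pi (j - 1)%nat) by (apply Hp; lia).
  assert (Hf0 : forall k, 0 <= f k) by (intros; apply Rmax_l).
  assert (0 <= xs / (xs + delta)) by (apply Rlt_le, Rdiv_lt_0_compat; lra).
  destruct (le_lt_dec j tau) as [Hle|Hgt].
  - unfold f at 1. rewrite Rmax_left by (assert (INR j <= INR tau) by (apply le_INR; auto); lra).
    pose proof (Hf0 (j - 1)%nat). rewrite Rmult_0_l. apply Rmult_le_pos; auto. nra.
  - pose proof (bal' c lam d xs y pi Hd Hlam Hss j ltac:(lia)) as B.
    rewrite y_high in B by lia. rewrite INR_cj in B by lia.
    assert (Ef : f j = f (j - 1)%nat + 1).
    { unfold f. assert (INR tau + 1 <= INR j) by (rewrite <- S_INR; apply le_INR; lia).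
      assert (INR (j - 1) = INR j - 1) by (rewrite minus_INR by lia; simpl; lra).
      rewrite !Rmax_right; lra. }
    rewrite Ef.
    assert (Hcp : 0 < INR c) by (apply lt_0_INR; lia).
    assert (Hq : pi j <= xs / (xs + delta) * pi (j - 1)%nat).
    { apply Rmult_le_reg_r with ((xs + delta) * INR c); [nra|].
      replace (xs / (xs + delta) * pi (j - 1)%nat * ((xs + delta) * INR c)) with (pi (j - 1)%nat * INR c * xs) by (field; lra).
      replace (pi j * ((xs + delta) * INR c)) with (pi j * (xs + delta) * INR c) by ring.
      rewrite B. assert (1 <= INR j) by (apply (le_INR 1); lia).
      apply Rmult_le_compat_r; [lra|]. apply Rmult_le_compat_l; [auto|lra]. }
    pose proof (Hf0 (j - 1)%nat). nra.
Qed.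

Lemma Am_bound : Am c pi <= INR tau + xs / delta.
Proof.
  pose proof Hss as [Hp [Hs _]].
  set (U := sum_f_R0 (fun j => f j * pi j) c).
  set (q := xs / (xs + delta)).
  assert (HU : U <= q * (U + 1)).
  { unfold U at 1. rewrite (sum_split0 c _ Hc).
    assert (f O = 0) by (unfold f; apply Rmax_left; simpl; pose proof (pos_INR tau); lra).
    rewrite H, Rmult_0_l, Rplus_0_l.
    apply Rle_trans with (sum_f_R0 (fun i => q * ((f i + 1) * pi i)) (c - 1)).
    - apply sum_Rle. intros i Hi. pose proof (f_step (S i) ltac:(lia)). replace (S i - 1)%nat with i in H0 by lia. auto.
    - rewrite (sum_eq _ (fun i => ((f i + 1) * pi i) * q)) by (intros; ring). rewrite <- scal_sum.
      unfold U. replace (sum_f_R0 (fun j => f j * pi j) c + 1) with (sum_f_R0 (fun j => (f j + 1) * pi j) c).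
      2:{ rewrite (sum_eq _ (fun j => f j * pi j + pi j)) by (intros; ring). rewrite plus_sum, Hs. reflexivity. }
      assert (0 <= q) by (apply Rlt_le, Rdiv_lt_0_compat; lra).
      apply Rmult_le_compat_l; auto. apply sum_mono_n; [|lia].
      intros i Hi. apply Rmult_le_pos; [pose proof (Rmax_l 0 (INR i - INR tau)); unfold f; lra|apply Hp; lia]. }
  assert (HU2 : U <= xs / delta).
  { assert (U * (xs + delta) <= xs * (U + 1)).
    { apply Rmult_le_compat_r with (r := xs + delta) in HU; [|lra].
      replace (q * (U + 1) * (xs + delta)) with (xs * (U + 1)) in HU by (unfold q; field; lra). lra. }
    apply (Rmult_le_reg_r delta); [lra|]. replace (xs / delta * delta) with xs by (field; lra). lra. }
  unfold Am.
  apply Rle_trans with (sum_f_R0 (fun j => INR tau * pi j + 1 * (f j * pi j)) c).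
  - apply sum_Rle. intros j Hj. assert (0 <= pi j) by (apply Hp; auto).
    pose proof (Rmax_r 0 (INR j - INR tau)). fold (f j) in H0. nra.
  - rewrite sum_lin. rewrite Hs. fold U. lra.
Qed.
End TP.

Lemma upper_tp c lam d xs alpha g s eps k1 delta tau pi :
  (1 <= c)%nat -> 0 < d -> 0 < xs < 1 -> lam * xs * d = INR c -> reward_function g -> 0 <= s -> 0 <= k1 ->
  0 < delta <= eps -> delta <= xs / 2 ->
  (forall x, xs - eps <= x <= xs + eps -> g xs + s * (x - xs) - k1 * rpow (Rabs (x - xs)) alpha <= g x) ->
  (1 <= tau <= c)%nat -> 2 * xs * INR tau <= delta * INR c ->
  is_steady_state c lam d (two_price (xs - delta) (xs + delta) tau) pi ->
  lam * g xs - sum_f 1 c (fun j => pi j * lam * g (two_price (xs - delta) (xs + delta) tau j)) <=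
  lam * g xs * (1 - delta / (2 * xs)) ^ tau + lam * k1 * Rpower delta alpha + s * (INR tau + xs / delta) / d.
Proof.
  intros Hc Hd Hxs Hlam Hrw Hs Hk1 Hdel Hdel2 Hloc Htau Htc Hss.
  pose proof Hrw as [Hg0 [Hmon _]].
  rewrite (loss_identity c lam d xs _ pi Hc Hd Hlam Hss g s Hg0).
  pose proof (pi0_bound c lam d xs delta tau pi Hc Hd Hxs Hlam ltac:(lra) Htau Htc Hss) as Hpi0.
  pose proof (Am_bound c lam d xs delta tau pi Hc Hd Hxs Hlam ltac:(lra) Htau Hss) as HAm.
  pose proof Hss as [Hp [Hsum _]].
  assert (Hcpos : 0 < INR c) by (apply lt_0_INR; lia).
  assert (Hlampos : 0 < lam).
  { destruct (Rle_lt_dec lam 0); auto. assert (lam * xs * d <= 0).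
    { apply Rmult_le_0_r; [|lra]. apply Rmult_le_0_r; lra. } lra. }
  assert (Hgx : 0 <= g xs) by (rewrite <- Hg0; apply Hmon; lra).
  assert (H0 : pi 0%nat * hfun xs g s 0 <= g xs * (1 - delta / (2 * xs)) ^ tau).
  { unfold hfun. rewrite Hg0. assert (0 <= pi 0%nat) by (apply Hp; lia).
    assert (pi 0%nat * (g xs + s * (0 - xs) - 0) <= pi 0%nat * g xs) by (apply Rmult_le_compat_l; nra).
    assert (pi 0%nat * g xs <= (1 - delta / (2 * xs)) ^ tau * g xs) by (apply Rmult_le_compat_r; lra).
    lra. }
  assert (HR : 0 < Rpower delta alpha) by apply Rpower_pos.
  assert (H1 : sum_f_R0 (fun i => pi (S i) * hfun xs g s (two_price (xs - delta) (xs + delta) tau (S i))) (c - 1)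
               <= k1 * Rpower delta alpha).
  { apply Rle_trans with (sum_f_R0 (fun i => (k1 * Rpower delta alpha) * pi (S i) + 0 * 0) (c - 1)).
    - apply sum_Rle. intros i Hi. assert (0 <= pi (S i)) by (apply Hp; lia).
      assert (hfun xs g s (two_price (xs - delta) (xs + delta) tau (S i)) <= k1 * Rpower delta alpha).
      { set (z := two_price (xs - delta) (xs + delta) tau (S i)).
        assert (Hz : Rabs (z - xs) = delta).
        { unfold z, two_price. destruct (S i <=? tau)%nat.
          - replace (xs - delta - xs) with (- delta) by ring. rewrite Rabs_Ropp, Rabs_pos_eq; lra.
          - replace (xs + delta - xs) with delta by ring. rewrite Rabs_pos_eq; lra. }
        pose proof (Rabs_le_betw (z - xs) delta ltac:(lra)).
        pose proof (Hloc z ltac:(lra)). rewrite Hz, rpow_pos_eq in H2 by lra.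
        unfold hfun. lra. }
      nra.
    - rewrite sum_lin. rewrite (sum_split0 c pi Hc) in Hsum. assert (0 <= pi 0%nat) by (apply Hp; lia).
      assert (0 <= k1 * Rpower delta alpha) by nra.
      replace (sum_f_R0 (fun _ => 0) (c - 1)) with 0 by (rewrite sum_cte; ring). nra. }
  assert (s * Am c pi / d <= s * (INR tau + xs / delta) / d).
  { unfold Rdiv. apply Rmult_le_compat_r; [apply Rlt_le, Rinv_0_lt_compat; lra|]. apply Rmult_le_compat_l; lra. }
  nra.
Qed.

Lemma exp_le' x y : x <= y -> exp x <= exp y.
Proof. intros H. destruct (Rle_lt_or_eq_dec _ _ H) as [H1|H1]; [left; apply exp_increasing; auto|subst; lra]. Qed.

Lemma exp_pow' x n : exp x ^ n = exp (x * INR n).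
Proof. induction n; simpl pow. - rewrite INR_0, Rmult_0_r, exp_0; auto.
  - rewrite IHn, S_INR, <- exp_plus. f_equal. ring. Qed.

Lemma pow_exp_bound u n : 0 <= u <= 1 -> (1 - u) ^ n <= exp (- (u * INR n)).
Proof.
  intros H. replace (- (u * INR n)) with ((- u) * INR n) by ring. rewrite <- exp_pow'.
  apply pow_incr. split; [lra|]. pose proof (exp_ineq1_le (- u)). lra.
Qed.

Lemma eventually_pow beta M : 0 < beta -> exists n0 : nat, forall c : nat, (n0 <= c)%nat -> M <= Rpower (INR c) beta.
Proof.
  intros Hb. set (M' := Rmax M 1). assert (HM' : 1 <= M') by apply Rmax_r.
  set (A := Rpower M' (1 / beta)). assert (HA : 0 < A) by apply Rpower_pos.
  destruct (nat_of_up A HA) as [N [HN1 HN2]].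
  exists N. intros c Hc. assert (INR N <= INR c) by (apply le_INR; auto).
  apply Rle_trans with M'; [apply Rmax_l|].
  replace M' with (Rpower A beta).
  - apply Rle_Rpower_l; lra.
  - unfold A. rewrite Rpower_mult. replace (1 / beta * beta) with 1 by (field; lra). apply Rpower_1; lra.
Qed.

Lemma opt_between c lam d g x0 M :
  policy c x0 -> (forall x, policy c x -> avg_reward c lam d g x <= M) ->
  avg_reward c lam d g x0 <= opt_reward c lam d g <= M.
Proof.
  intros Hx0 Hub. unfold opt_reward.
  set (S := fun r => exists x, policy c x /\ r = avg_reward c lam d g x).
  destruct (Lub_Rbar_correct S) as [Hu Hl].
  assert (H1 : Rbar_le (avg_reward c lam d g x0) (Lub_Rbar S)) by (apply Hu; exists x0; auto).
  assert (H2 : Rbar_le (Lub_Rbar S) M).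
  { apply Hl. intros r [x [Hx ->]]. simpl. apply Hub; auto. }
  destruct (Lub_Rbar S) as [l| |]; simpl in *; try contradiction. auto.
Qed.

Lemma s_pos g xs alpha s1 s2 :
  0 < xs < 1 -> 1 < alpha -> 0 < s1 -> assumption1 g xs alpha s1 -> assumption2 g xs alpha s2 -> 0 < s2.
Proof.
  intros Hxs Ha Hs1 [e1 [k1 [He1 [He1m [Hk1 [_ [_ H1]]]]]]] [e2 [k2 [He2 [He2m [Hk2 [_ [_ H2]]]]]]].
  set (B := s1 / (2 * (k1 + 1))). assert (HB : 0 < B) by (unfold B; apply Rdiv_lt_0_compat; lra).
  set (t := Rmin (Rmin e1 e2) (Rpower B (1 / (alpha - 1)))).
  assert (Ht : 0 < t).
  { unfold t. apply Rmin_glb_lt; [apply Rmin_glb_lt; lra|apply Rpower_pos]. }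
  assert (Ht1 : t <= e1) by (unfold t; eapply Rle_trans; [apply Rmin_l|apply Rmin_l]).
  assert (Ht2 : t <= e2) by (unfold t; eapply Rle_trans; [apply Rmin_l|apply Rmin_r]).
  assert (HtB : Rpower t (alpha - 1) <= B).
  { replace B with (Rpower (Rpower B (1 / (alpha - 1))) (alpha - 1)).
    - apply Rle_Rpower_l; [lra|]. split; auto. apply Rmin_r.
    - rewrite Rpower_mult. replace (1 / (alpha - 1) * (alpha - 1)) with 1 by (field; lra). apply Rpower_1; auto. }
  assert (Hta : Rpower t alpha = t * Rpower t (alpha - 1)).
  { replace alpha with (1 + (alpha - 1)) at 1 by ring. rewrite Rpower_plus, Rpower_1; auto. }
  assert (Habs : Rabs (xs + t - xs) = t) by (replace (xs + t - xs) with t by ring; apply Rabs_pos_eq; lra).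
  specialize (H1 (xs + t) ltac:(lra)). specialize (H2 (xs + t) ltac:(lra)).
  rewrite Habs, rpow_pos_eq in H1, H2 by auto.
  pose proof (Rpower_pos t alpha).
  assert (k1 * Rpower t alpha <= t * (s1 / 2)).
  { rewrite Hta. assert (k1 * Rpower t (alpha - 1) <= s1 / 2).
    { apply Rle_trans with (k1 * B); [apply Rmult_le_compat_l; lra|].
      apply Rle_trans with ((k1 + 1) * B); [nra|]. unfold B; right; field; lra. }
    nra. }
  nra.
Qed.

Theorem corollary1 (xs d alpha : R) (g : R -> R) :
  0 < xs < 1 -> 0 < d -> 1 < alpha ->
  reward_function g ->
  (exists s1, 0 < s1 /\ assumption1 g xs alpha s1) ->
  (exists s2, assumption2 g xs alpha s2) ->
  exists (K1 K2 : R) (c0 : nat),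
    0 < K1 /\ K1 <= K2 /\
    forall c : nat, (c0 <= c)%nat ->
      let lam := INR c / (xs * d) in
      exists (xL xH : R) (tau : nat),
        0 <= xL <= 1 /\ 0 <= xH <= 1 /\ (1 <= tau <= c)%nat /\
        K1 * Rpower (INR c) (1 / (alpha + 1))
          <= lam * g xs - opt_reward c lam d g /\
        lam * g xs - opt_reward c lam d g
          <= lam * g xs - avg_reward c lam d g (two_price xL xH tau) /\
        lam * g xs - avg_reward c lam d g (two_price xL xH tau)
          <= K2 * Rpower (INR c) (1 / (alpha + 1)) * (ln (INR c)) ^ 2.
Proof.
  intros Hxs Hd Ha Hrw [s1 [Hs1 HA1]] [s2 HA2].
  pose proof (s_pos g xs alpha s1 s2 Hxs Ha Hs1 HA1 HA2) as Hs2.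
  destruct HA1 as [e1 [k1 [He1 [He1m [Hk1 [_ [_ Hl1]]]]]]].
  destruct HA2 as [e2 [k2 [He2 [He2m [Hk2 [_ [Hsg2 Hl2]]]]]]].
  pose proof (Rmin_l xs (1 - xs)). pose proof (Rmin_r xs (1 - xs)).
  pose proof Hrw as [Hg0 [Hmon _]].
  assert (Hgx : 0 <= g xs) by (rewrite <- Hg0; apply Hmon; lra).
  set (kap := xs / 18).
  set (K1 := Rmin (s2 / (18 * d)) (k2 * Rpower kap alpha / kap / (18 * d))).
  assert (HK1 : 0 < K1).
  { unfold K1. apply Rmin_glb_lt; apply Rdiv_lt_0_compat; try lra.
    apply Rdiv_lt_0_compat; [|unfold kap; lra]. apply Rmult_lt_0_compat; [lra|apply Rpower_pos]. }
  set (r := (alpha - 1) / (2 * (alpha + 1))).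
  assert (Hr : 0 < r) by (unfold r; apply Rdiv_lt_0_compat; lra).
  set (Mw := Rmax 2 (4 * xs * xs / r + 2 * xs)).
  set (Mg := Rmax (Rmax 1 (1 / e1)) (Rmax (2 / xs) (kap / e2))).
  set (K2' := g xs / (xs * d) + k1 / (xs * d) + s1 * (3 * xs + 1) / d).
  set (K2 := Rmax K1 K2').
  destruct (eventually_pow (1 / (alpha + 1)) Mg ltac:(apply Rdiv_lt_0_compat; lra)) as [n1 Hn1].
  destruct (eventually_pow r Mw Hr) as [n2 Hn2].
  exists K1, K2, (max 3 (max n1 n2)).
  split; [auto|]. split; [apply Rmax_l|].
  intros c Hc lam.
  assert (Hc3 : 3 <= INR c) by (replace 3 with (INR 3) by (simpl; lra); apply le_INR; lia).
  assert (Hcpos : 0 < INR c) by lra.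
  assert (Hc1 : (1 <= c)%nat) by lia.
  set (gam := Rpower (INR c) (1 / (alpha + 1))).
  set (W := Rpower (INR c) r).
  assert (HgM : Mg <= gam) by (apply Hn1; lia).
  assert (HWM : Mw <= W) by (apply Hn2; lia).
  assert (Hg1 : 1 <= gam) by (unfold Mg in HgM; pose proof (Rmax_l (Rmax 1 (1/e1)) (Rmax (2/xs) (kap/e2))); pose proof (Rmax_l 1 (1/e1)); lra).
  assert (Hge1 : 1 / e1 <= gam) by (unfold Mg in HgM; pose proof (Rmax_l (Rmax 1 (1/e1)) (Rmax (2/xs) (kap/e2))); pose proof (Rmax_r 1 (1/e1)); lra).
  assert (Hgx2 : 2 / xs <= gam) by (unfold Mg in HgM; pose proof (Rmax_r (Rmax 1 (1/e1)) (Rmax (2/xs) (kap/e2))); pose proof (Rmax_l (2/xs) (kap/e2)); lra).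
  assert (Hge2 : kap / e2 <= gam) by (unfold Mg in HgM; pose proof (Rmax_r (Rmax 1 (1/e1)) (Rmax (2/xs) (kap/e2))); pose proof (Rmax_r (2/xs) (kap/e2)); lra).
  assert (HW2 : 2 <= W) by (unfold Mw in HWM; pose proof (Rmax_l 2 (4 * xs * xs / r + 2 * xs)); lra).
  assert (HW3 : 4 * xs * xs / r + 2 * xs <= W) by (unfold Mw in HWM; pose proof (Rmax_r 2 (4 * xs * xs / r + 2 * xs)); lra).
  assert (Hceq : gam * gam * W * W = INR c).
  { unfold gam, W. rewrite <- !Rpower_plus. replace (1 / (alpha + 1) + 1 / (alpha + 1) + r + r) with 1.
    - apply Rpower_1; auto.
    - unfold r. field. lra. }
  assert (Hpow : Rpower gam alpha * gam = INR c).
  { unfold gam. rewrite Rpower_mult. rewrite <- Rpower_plus.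
    replace (1 / (alpha + 1) * alpha + 1 / (alpha + 1)) with 1 by (field; lra). apply Rpower_1; auto. }
  assert (Hgg : 4 * (gam * gam) <= INR c).
  { rewrite <- Hceq. replace (gam * gam * W * W) with ((gam * gam) * (W * W)) by ring.
    assert (4 <= W * W) by nra. assert (0 <= gam * gam) by nra.
    rewrite (Rmult_comm 4). apply Rmult_le_compat_l; auto. }
  assert (Hg4 : 4 * gam <= INR c) by nra.
  assert (Hg2 : gam * gam <= INR c) by nra.
  assert (Hlam : lam * xs * d = INR c) by (unfold lam; field; lra).
  assert (Hln1 : 1 <= ln (INR c)).
  { rewrite <- (ln_exp 1). apply ln_le; [apply exp_pos|]. pose proof exp_le_3. lra. }
  assert (HlnW : ln (INR c) <= W / r).
  { assert (r * ln (INR c) <= W).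
    { pose proof (exp_ineq1_le (ln W)). rewrite exp_ln in H1 by (unfold W; apply Rpower_pos).
      unfold W in H1 at 1. rewrite ln_Rpower in H1. lra. }
    apply (Rmult_le_reg_r r); auto. unfold Rdiv. rewrite Rmult_assoc, Rinv_l; lra. }
  set (delta := 1 / gam).
  assert (Hdpos : 0 < delta) by (unfold delta; apply Rdiv_lt_0_compat; lra).
  assert (Hde1 : delta <= e1).
  { unfold delta. apply div_le_iff; [lra|]. apply div_le_iff in Hge1; [|lra]. nra. }
  assert (Hdx : delta <= xs / 2).
  { unfold delta. apply div_le_iff; [lra|]. apply div_le_iff in Hgx2; [|lra]. nra. }
  assert (Heta : xs / 18 / gam <= e2).
  { fold kap. apply div_le_iff; [lra|]. apply div_le_iff in Hge2; [|lra]. nra. }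
  set (t := 2 * xs * gam * ln (INR c)).
  assert (Htpos : 0 < t) by (unfold t; apply Rmult_lt_0_compat; nra).
  destruct (nat_of_up t Htpos) as [tau [Ht1 Ht2]].
  assert (Htau1 : (1 <= tau)%nat) by (destruct tau; [simpl in Ht1; lra|lia]).
  assert (Htc : 2 * xs * INR tau <= delta * INR c).
  { unfold delta. rewrite <- Hceq.
    assert (t <= 2 * xs * gam * (W / r)) by (unfold t; apply Rmult_le_compat_l; nra).
    assert (2 * xs * INR tau * gam <= gam * gam * W * (4 * xs * xs / r + 2 * xs)).
    { apply Rle_trans with (2 * xs * gam * (t + 1)); [nra|].
      replace (gam * gam * W * (4 * xs * xs / r + 2 * xs)) with (2 * xs * gam * (2 * xs * gam * (W / r)) + 2 * xs * (gam * gam * W)) by (field; lra).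
      assert (1 <= gam * W) by nra.
      assert (gam <= gam * gam * W) by (replace (gam * gam * W) with (gam * (gam * W)) by ring; nra).
      assert (0 < 2 * xs * gam) by nra.
      assert (2 * xs * gam * t <= 2 * xs * gam * (2 * xs * gam * (W / r))) by (apply Rmult_le_compat_l; lra).
      nra. }
    apply (Rmult_le_reg_r gam); [lra|]. replace (1 / gam * (gam * gam * W * W) * gam) with (gam * gam * W * W) by (field; lra).
    nra. }
  assert (Htauc : (tau <= c)%nat).
  { apply INR_le. assert (delta * INR c <= xs / 2 * INR c) by (apply Rmult_le_compat_r; lra). nra. }
  set (TP := two_price (xs - delta) (xs + delta) tau).
  assert (HTPpol : policy c TP).
  { intros j Hj. unfold TP, two_price. destruct (j <=? tau)%nat; lra. }
  assert (Hdlt : 0 < d) by auto.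
  assert (Hlampos : 0 < lam) by (unfold lam; apply Rdiv_lt_0_compat; nra).
  assert (Hall : forall x, policy c x -> avg_reward c lam d g x <= lam * g xs - K1 * gam).
  { intros x Hx. pose proof (ss_spec c lam d x Hc1 Hlampos Hd Hx) as Hss.
    pose proof (lower_policy c lam d xs alpha g s2 e2 k2 gam x (steady_state c lam d x) Hc1 Hd Hxs Hlam Hrw Hs2 Hsg2 He2 He2m Hk2 Hl2 Hg1 Hg4 Hg2 Hpow Heta Hx Hss) as HL.
    fold kap in HL. fold K1 in HL. unfold avg_reward. lra. }
  destruct (opt_between c lam d g TP (lam * g xs - K1 * gam) HTPpol Hall) as [Ho1 Ho2].
  exists (xs - delta), (xs + delta), tau.
  split; [lra|]. split; [lra|]. split; [lia|].
  fold gam. split; [lra|]. split; [fold TP; lra|].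
  pose proof (ss_spec c lam d TP Hc1 Hlampos Hd HTPpol) as HssT.
  pose proof (upper_tp c lam d xs alpha g s1 e1 k1 delta tau (steady_state c lam d TP) Hc1 Hd Hxs Hlam Hrw ltac:(lra) Hk1 ltac:(lra) Hdx Hl1 (conj Htau1 Htauc) Htc HssT) as HU.
  unfold avg_reward. fold TP. fold TP in HU.
  assert (Hrho : (1 - delta / (2 * xs)) ^ tau <= / INR c).
  { apply Rle_trans with (exp (- (delta / (2 * xs) * INR tau))).
    - apply pow_exp_bound. split; [apply Rlt_le, Rdiv_lt_0_compat; lra|]. apply div_le_iff; lra.
    - rewrite <- (exp_ln (INR c)) at 1 by lra. rewrite <- exp_Ropp. apply exp_le'.
      assert (ln (INR c) <= delta / (2 * xs) * INR tau); [|lra].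
      replace (ln (INR c)) with (delta / (2 * xs) * t) by (unfold t, delta; field; lra).
      apply Rmult_le_compat_l; [apply Rlt_le, Rdiv_lt_0_compat; lra|lra]. }
  assert (HRd : Rpower delta alpha = gam / INR c).
  { unfold delta. replace (1 / gam) with (/ gam) by (field; lra). rewrite Rpower_inv by lra.
    rewrite <- Hpow. field. split; [lra|]. pose proof (Rpower_pos gam alpha); lra. }
  rewrite HRd in HU.
  set (L := ln (INR c)) in *.
  assert (T1 : lam * g xs * (1 - delta / (2 * xs)) ^ tau <= g xs / (xs * d)).
  { apply Rle_trans with (lam * g xs * / INR c); [apply Rmult_le_compat_l; nra|].
    right; unfold lam; field; lra. }
  assert (T2 : lam * k1 * (gam / INR c) = k1 / (xs * d) * gam) by (unfold lam; field; lra).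
  assert (T3 : s1 * (INR tau + xs / delta) / d <= s1 / d * (2 * xs * gam * L + 1 + xs * gam)).
  { unfold delta. replace (xs / (1 / gam)) with (xs * gam) by (field; lra).
    replace (s1 / d * (2 * xs * gam * L + 1 + xs * gam)) with (s1 * (t + 1 + xs * gam) / d) by (unfold t; field; lra).
    unfold Rdiv. apply Rmult_le_compat_r; [apply Rlt_le, Rinv_0_lt_compat; lra|]. apply Rmult_le_compat_l; lra. }
  assert (HL2 : L <= L ^ 2) by (simpl; nra).
  assert (HL1 : 1 <= L ^ 2) by lra.
  assert (HQ2 : gam <= gam * L ^ 2) by (rewrite <- (Rmult_1_r gam) at 1; apply Rmult_le_compat_l; lra).
  assert (HQ1 : 1 <= gam * L ^ 2) by lra.
  assert (HQ3 : gam * L <= gam * L ^ 2) by (apply Rmult_le_compat_l; lra).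
  assert (HK2' : K2' <= K2) by apply Rmax_r.
  assert (Hc1' : 0 <= g xs / (xs * d)) by (apply Rmult_le_pos; [lra|apply Rlt_le, Rinv_0_lt_compat; nra]).
  assert (Hc2' : 0 <= k1 / (xs * d)) by (apply Rmult_le_pos; [lra|apply Rlt_le, Rinv_0_lt_compat; nra]).
  assert (Hc3' : 0 < s1 / d) by (apply Rdiv_lt_0_compat; lra).
  assert (K2' * (gam * L ^ 2) <= K2 * (gam * L ^ 2)) by (apply Rmult_le_compat_r; nra).
  assert (g xs / (xs * d) + k1 / (xs * d) * gam + s1 / d * (2 * xs * gam * L + 1 + xs * gam) <= K2' * (gam * L ^ 2)).
  { unfold K2'. replace (s1 * (3 * xs + 1) / d) with (s1 / d * (3 * xs + 1)) by (field; lra).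
    set (Q := gam * L ^ 2) in *.
    assert (g xs / (xs * d) <= g xs / (xs * d) * Q) by (rewrite <- (Rmult_1_r (g xs / (xs * d))) at 1; apply Rmult_le_compat_l; lra).
    assert (k1 / (xs * d) * gam <= k1 / (xs * d) * Q) by (apply Rmult_le_compat_l; lra).
    assert (2 * xs * gam * L + 1 + xs * gam <= (3 * xs + 1) * Q).
    { assert (2 * xs * (gam * L) <= 2 * xs * Q) by (apply Rmult_le_compat_l; lra).
      assert (xs * gam <= xs * Q) by (apply Rmult_le_compat_l; lra). nra. }
    assert (s1 / d * (2 * xs * gam * L + 1 + xs * gam) <= s1 / d * ((3 * xs + 1) * Q)) by (apply Rmult_le_compat_l; lra).
    nra. }
  nra.
Qed.
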